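(* Let $y$ be a $\lambda$-variable, $t$ a term, and $\sigma=[(x_i:=y)_{1\le i\le n};(a_j:=^*y)_{1\le j\le m}]$ for distinct $\lambda$-variables $x_1,\dots,x_n$ and distinct $\mu$-variables $a_1,\dots,a_m$. (1) If $(t\sigma\;y)$ is normalizable, then $t$ is normalizable. (2) If $t\sigma$ is normalizable, then $t$ is normalizable.
   Context: $\lambda\mu$-terms: $t::= x\mid \lambda x.t\mid (t\;t)\mid \mu a.t\mid (a\;t)$ over disjoint infinite sets of $\lambda$-variables and $\mu$-variables. Reduction $(\lambda x.u\;v)\triangleright u[x:=v]$, $(\mu a.u\;v)\triangleright\mu a.u[a:=^*v]$ ($u[a:=^*v]$ replaces each subterm $(a\;w)$ of $u$ by $(a\;(w\;v))$); a term is normalizable if it reduces (by the compatible closure of these rules) to a normal form. $t[(x_i:=y);(a_j:=^*y)]$ is obtained from $t$ by replacing each $x_i$ by $y$ and inductively each subterm $(a_j\;w)$ by $(a_j\;(w\;y))$. *)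

(* Defs.v *)
(* Lambda-mu calculus with de Bruijn indices.
   Two separate (disjoint) index spaces: lambda-variables and mu-variables.
   [Lam t] binds lambda-index 0 in t, [Mu t] binds mu-index 0 in t.
   Free variables are the indices that exceed the number of enclosing
   binders of the corresponding kind. *)
From Stdlib Require Import Arith Bool List Relations.
Import ListNotations.

Inductive term : Type :=
| Var   : nat -> term
| Lam   : term -> term
| App   : term -> term -> term
| Mu    : term -> term
| Named : nat -> term -> term.   (* (a t), a a mu-variable *)

Fixpoint lift_l (k : nat) (t : term) : term :=
  match t with
  | Var n => if k <=? n then Var (S n) else Var n
  | Lam u => Lam (lift_l (S k) u)
  | App u v => App (lift_l k u) (lift_l k v)
  | Mu u => Mu (lift_l k u)
  | Named b u => Named b (lift_l k u)
  end.

Fixpoint lift_m (k : nat) (t : term) : term :=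
  match t with
  | Var n => Var n
  | Lam u => Lam (lift_m k u)
  | App u v => App (lift_m k u) (lift_m k v)
  | Mu u => Mu (lift_m (S k) u)
  | Named b u => Named (if k <=? b then S b else b) (lift_m k u)
  end.

(* u[x_k := v], removing the binder of index k (beta-reduction) *)
Fixpoint subst_l (k : nat) (v : term) (t : term) : term :=
  match t with
  | Var n => if n =? k then v else if k <? n then Var (pred n) else Var n
  | Lam u => Lam (subst_l (S k) (lift_l 0 v) u)
  | App u w => App (subst_l k v u) (subst_l k v w)
  | Mu u => Mu (subst_l k (lift_m 0 v) u)
  | Named b u => Named b (subst_l k v u)
  end.

(* u[a_k :=* v] : each subterm (a_k w) becomes (a_k (w v)); binder kept *)
Fixpoint subst_m (k : nat) (v : term) (t : term) : term :=
  match t with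
  | Var n => Var n
  | Lam u => Lam (subst_m k (lift_l 0 v) u)
  | App u w => App (subst_m k v u) (subst_m k v w)
  | Mu u => Mu (subst_m (S k) (lift_m 0 v) u)
  | Named b u =>
      if b =? k then Named b (App (subst_m k v u) v)
      else Named b (subst_m k v u)
  end.

Inductive step : term -> term -> Prop :=
| step_beta : forall u v, step (App (Lam u) v) (subst_l 0 v u)
| step_mu   : forall u v, step (App (Mu u) v) (Mu (subst_m 0 (lift_m 0 v) u))
| step_lam  : forall u u', step u u' -> step (Lam u) (Lam u')
| step_appl : forall u u' v, step u u' -> step (App u v) (App u' v)
| step_appr : forall u v v', step v v' -> step (App u v) (App u v')
| step_mu_c : forall u u', step u u' -> step (Mu u) (Mu u')
| step_named: forall b u u', step u u' -> step (Named b u) (Named b u').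

Definition red : term -> term -> Prop := clos_refl_trans term step.

Definition normal (t : term) : Prop := forall t', ~ step t t'.

Definition normalizable (t : term) : Prop :=
  exists t', red t t' /\ normal t'.

(* The simultaneous substitution sigma = [(x_i := y)_i ; (a_j :=* y)_j]
   on free variables: xs = free lambda-variables x_i, as_ = free
   mu-variables a_j, y = free lambda-variable.  d / e = number of enclosing
   lambda / mu binders. *)
Fixpoint sigma_aux (xs as_ : list nat) (y : nat) (d e : nat) (t : term) : term :=
  match t with
  | Var n => if (d <=? n) && existsb (Nat.eqb (n - d)) xs
             then Var (y + d) else Var n
  | Lam u => Lam (sigma_aux xs as_ y (S d) e u)
  | App u w => App (sigma_aux xs as_ y d e u) (sigma_aux xs as_ y d e w)
  | Mu u => Mu (sigma_aux xs as_ y d (S e) u)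
  | Named b u =>
      if (e <=? b) && existsb (Nat.eqb (b - e)) as_
      then Named b (App (sigma_aux xs as_ y d e u) (Var (y + d)))
      else Named b (sigma_aux xs as_ y d e u)
  end.

Definition sigma (xs as_ : list nat) (y : nat) (t : term) : term :=
  sigma_aux xs as_ y 0 0 t.

(* Main.v *)
Require Import Defs.
From Stdlib Require Import List Arith Lia Relations.
Local Open Scope bool_scope.

Definition up (f : nat -> nat) (n : nat) : nat :=
  match n with 0 => 0 | S m => S (f m) end.
Definition cons_f (a : nat) (f : nat -> nat) (n : nat) : nat :=
  match n with 0 => a | S m => f m end.
Definition consb (a : bool) (Q : nat -> bool) (n : nat) : bool :=
  match n with 0 => a | S m => Q m end.
Definition down (k n : nat) : nat := if k <? n then pred n else n.

Fixpoint ren_l (f : nat -> nat) (t : term) : term :=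
  match t with
  | Var n => Var (f n)
  | Lam u => Lam (ren_l (up f) u)
  | App u v => App (ren_l f u) (ren_l f v)
  | Mu u => Mu (ren_l f u)
  | Named b u => Named b (ren_l f u)
  end.

Fixpoint ren_m (h : nat -> nat) (t : term) : term :=
  match t with
  | Var n => Var n
  | Lam u => Lam (ren_m h u)
  | App u v => App (ren_m h u) (ren_m h v)
  | Mu u => Mu (ren_m (up h) u)
  | Named b u => Named (h b) (ren_m h u)
  end.

Lemma ren_l_ext : forall t f g, (forall n, f n = g n) -> ren_l f t = ren_l g t.
Proof.
  induction t; intros f g H; simpl; f_equal; auto.
  apply IHt. intros [|n]; simpl; auto.
Qed.

Lemma ren_m_ext : forall t f g, (forall n, f n = g n) -> ren_m f t = ren_m g t.
Proof.
  induction t; intros f g H; simpl; f_equal; auto.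
  apply IHt. intros [|n]; simpl; auto.
Qed.

Lemma ren_l_id : forall t, ren_l (fun n => n) t = t.
Proof.
  induction t; simpl; f_equal; auto.
  rewrite <- IHt at 2. apply ren_l_ext. intros [|n]; reflexivity.
Qed.

Lemma lift_l_ren : forall t k, lift_l k t = ren_l (fun n => if k <=? n then S n else n) t.
Proof.
  induction t; intros k; simpl; try (f_equal; auto; fail).
  - destruct (k <=? n); reflexivity.
  - f_equal. rewrite IHt. apply ren_l_ext. intros [|n]; simpl; auto.
    destruct (k <=? n); reflexivity.
Qed.

Lemma lift_m_ren : forall t k, lift_m k t = ren_m (fun n => if k <=? n then S n else n) t.
Proof.
  induction t; intros k; simpl; try (f_equal; auto; fail).
  - f_equal. rewrite IHt. apply ren_m_ext. intros [|n]; simpl; auto.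
    destruct (k <=? n); reflexivity.
Qed.

Definition sf (k m n : nat) : nat :=
  if n =? k then m else if k <? n then pred n else n.

Lemma subst_var_ren : forall t k m, subst_l k (Var m) t = ren_l (sf k m) t.
Proof.
  induction t; intros k m; simpl; auto.
  - unfold sf. destruct (n =? k); auto. destruct (k <? n); auto.
  - { f_equal. rewrite IHt. apply ren_l_ext. intros [|n]; unfold sf; simpl; auto.
    destruct (Nat.eqb_spec n k); auto.
    destruct (Nat.ltb_spec k n); destruct (Nat.ltb_spec (S k) (S n)); try lia;
    try reflexivity; destruct n; try lia; reflexivity.
  }
  - f_equal; auto.
  - f_equal; auto.
  - f_equal; auto.
Qed.

Inductive Rel : (nat -> nat) -> (nat -> nat) -> (nat -> bool) -> nat -> term -> term -> Prop :=
| R_var : forall r k Q Y n, Rel r k Q Y (Var n) (Var (r n))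
| R_lam : forall r k Q Y t s, Rel (up r) k Q (S Y) t s -> Rel r k Q Y (Lam t) (Lam s)
| R_app : forall r k Q Y t1 t2 s1 s2, Rel r k Q Y t1 s1 -> Rel r k Q Y t2 s2 ->
    Rel r k Q Y (App t1 t2) (App s1 s2)
| R_mu : forall r k Q Y t s, Rel r (up k) (consb false Q) Y t s -> Rel r k Q Y (Mu t) (Mu s)
| R_nam : forall r k Q Y b t s, Q b = false -> Rel r k Q Y t s ->
    Rel r k Q Y (Named b t) (Named (k b) s)
| R_y1 : forall r k Q Y b t s, Q b = true -> Rel r k Q Y t s ->
    Rel r k Q Y (Named b t) (Named (k b) (App s (Var Y)))
| R_y2 : forall r k Q Y b t s, Q b = true -> Rel (cons_f Y r) k Q Y t s ->
    Rel r k Q Y (Named b (Lam t)) (Named (k b) s)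
| R_y3 : forall r k Q Y b t s, Q b = true -> Rel r (up k) (consb true Q) Y t s ->
    Rel r k Q Y (Named b (Mu t)) (Named (k b) (Mu s)).

Lemma Rel_ren_l : forall r k Q Y t s, Rel r k Q Y t s ->
  forall f g r' Y', (forall n, g (r n) = r' (f n)) -> g Y = Y' ->
  Rel r' k Q Y' (ren_l f t) (ren_l g s).
Proof.
  induction 1; intros f g r' Y' Hr HY; simpl.
  - rewrite Hr. constructor.
  - constructor. apply IHRel; [intros [|n]; simpl; auto; rewrite Hr; auto | simpl; auto].
  - constructor; auto.
  - constructor. auto.
  - constructor; auto.
  - rewrite HY. apply R_y1; auto.
  - apply R_y2; auto. apply IHRel; auto. intros [|n]; simpl; auto.
  - apply R_y3; auto.
Qed.

Lemma Rel_ren_m : forall r k Q Y t s, Rel r k Q Y t s ->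
  forall h1 h2 k' Q', (forall b, h2 (k b) = k' (h1 b)) -> (forall b, Q' (h1 b) = Q b) ->
  Rel r k' Q' Y (ren_m h1 t) (ren_m h2 s).
Proof.
  induction 1; intros h1 h2 k' Q' Hk HQ; simpl.
  - constructor.
  - constructor; auto.
  - constructor; auto.
  - constructor. apply IHRel; intros [|b]; simpl; auto; rewrite Hk; auto.
  - rewrite Hk. apply R_nam; [rewrite HQ; auto|auto].
  - rewrite Hk. apply R_y1; [rewrite HQ; auto|auto].
  - rewrite Hk. apply R_y2; [rewrite HQ; auto|auto].
  - rewrite Hk. apply R_y3; [rewrite HQ; auto|]. apply IHRel; intros [|b']; simpl; auto;
    rewrite Hk; auto.
Qed.

Lemma Rel_lift_l0 : forall r k Q Y v w, Rel r k Q Y v w ->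
  Rel (up r) k Q (S Y) (lift_l 0 v) (lift_l 0 w).
Proof.
  intros. rewrite !lift_l_ren. eapply Rel_ren_l; eauto.
Qed.

Lemma Rel_lift_l0_t : forall r k Q Y v w, Rel r k Q Y v w ->
  Rel (cons_f Y r) k Q Y (lift_l 0 v) w.
Proof.
  intros. rewrite lift_l_ren. rewrite <- (ren_l_id w). eapply Rel_ren_l; eauto.
Qed.

Lemma Rel_lift_m0 : forall r k Q Y v w q, Rel r k Q Y v w ->
  Rel r (up k) (consb q Q) Y (lift_m 0 v) (lift_m 0 w).
Proof.
  intros. rewrite !lift_m_ren. eapply Rel_ren_m; eauto.
Qed.

Lemma L3l : forall r k Q Y a b, Rel (up r) k Q (S Y) a b ->
  Rel (cons_f Y r) k Q Y a (subst_l 0 (Var Y) b).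
Proof.
  intros. rewrite subst_var_ren. rewrite <- (ren_l_id a). eapply Rel_ren_l; [eassumption| |].
  - intros [|n]; unfold sf; simpl; auto.
  - unfold sf; simpl. auto.
Qed.
Lemma L3m_gen : forall r k Q Y t s, Rel r k Q Y t s ->
  forall c c' Q', Q c = false -> (forall b, k b = c' <-> b = c) ->
  (forall b, Q' b = if b =? c then true else Q b) ->
  Rel r k Q' Y t (subst_m c' (Var Y) s).
Proof.
  induction 1; intros c c' Q' Hc Hk HQ; simpl.
  - constructor.
  - constructor. apply IHRel with c; auto.
  - constructor; eauto.
  - constructor. apply IHRel with (S c); auto.
    + intros [|b]; simpl; split; intro; try discriminate; try lia.
      * f_equal. apply Hk. lia.
      * f_equal. apply Hk. lia.
    + intros [|b]; simpl; auto.
  - destruct (Nat.eqb_spec (k b) c').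
    + apply Hk in e. subst b. apply R_y1; auto. rewrite HQ, Nat.eqb_refl; auto.
      apply IHRel with c; auto.
    + apply R_nam; [|apply IHRel with c; auto]. rewrite HQ.
      destruct (Nat.eqb_spec b c); auto. subst; exfalso; apply n; apply Hk; auto.
  - assert (b <> c) by congruence.
    destruct (Nat.eqb_spec (k b) c'). { apply Hk in e; contradiction. }
    apply R_y1; [rewrite HQ; destruct (Nat.eqb_spec b c); auto|]. apply IHRel with c; auto.
  - assert (b <> c) by congruence.
    destruct (Nat.eqb_spec (k b) c'). { apply Hk in e; contradiction. }
    apply R_y2; [rewrite HQ; destruct (Nat.eqb_spec b c); auto|]. apply IHRel with c; auto.
  - assert (b <> c) by congruence.
    destruct (Nat.eqb_spec (k b) c'). { apply Hk in e; contradiction. }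
    apply R_y3; [rewrite HQ; destruct (Nat.eqb_spec b c); auto|]. apply IHRel with (S c); auto.
    + intros [|b']; simpl; split; intro; try discriminate; try lia.
      * f_equal. apply Hk. lia.
      * f_equal. apply Hk. lia.
    + intros [|b']; simpl; auto.
Qed.

Lemma L3m : forall r k Q Y a b, Rel r (up k) (consb false Q) Y a b ->
  Rel r (up k) (consb true Q) Y a (subst_m 0 (Var Y) b).
Proof.
  intros. apply L3m_gen with (c := 0) (Q := consb false Q); auto.
  - intros [|b']; simpl; split; intro; auto; discriminate.
  - intros [|b']; simpl; auto.
Qed.

Lemma down_SS : forall k m, down (S k) (S m) = S (down k m).
Proof.
  intros. unfold down. destruct (Nat.ltb_spec k m); destruct (Nat.ltb_spec (S k) (S m)); try lia; auto.
Qed.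

Lemma subst_l_var_ne : forall k v n, n <> k -> subst_l k v (Var n) = Var (down k n).
Proof.
  intros. simpl. destruct (Nat.eqb_spec n k); [contradiction|]. unfold down.
  destruct (k <? n); auto.
Qed.

Lemma subL : forall r1 k Q Y1 u s, Rel r1 k Q Y1 u s ->
  forall kt ks r Y v w, r1 kt = ks ->
  (forall n, n <> kt -> r1 n <> ks /\ r (down kt n) = down ks (r1 n)) ->
  Y1 <> ks -> Y = down ks Y1 -> Rel r k Q Y v w ->
  Rel r k Q Y (subst_l kt v u) (subst_l ks w s).
Proof.
  induction 1; intros kt ks r' Y' v w Hk Hn HY HY' Hvw.
  - destruct (Nat.eqb_spec n kt).
    + subst. simpl. rewrite !Nat.eqb_refl. auto.
    + destruct (Hn n n0) as [H1 H2].
      rewrite !subst_l_var_ne; auto. rewrite <- H2. constructor.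
  - simpl. constructor. apply (IHRel (S kt) (S ks) (up r') (S Y') (lift_l 0 v) (lift_l 0 w)); auto.
    + simpl. congruence.
    + intros [|m] Hm; simpl.
      * split; auto.
      * destruct (Hn m) as [H1 H2]; [lia|]. split; [congruence|].
        rewrite !down_SS. simpl. congruence.
    + rewrite down_SS. congruence.
    + apply Rel_lift_l0; auto.
  - simpl. constructor; eauto.
  - simpl. constructor. apply IHRel; auto. apply Rel_lift_m0; auto.
  - simpl. apply R_nam; auto.
  - simpl. fold (subst_l ks w (Var Y)). rewrite subst_l_var_ne; auto. rewrite <- HY'. apply R_y1; eauto.
  - simpl. apply R_y2; auto. apply (IHRel (S kt) ks (cons_f Y' r') Y' (lift_l 0 v) w); auto.
    + intros [|m] Hm; simpl.
      * split; auto.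
      * destruct (Hn m) as [H1 H2]; [lia|]. split; [congruence|].
        rewrite down_SS. simpl. auto.
    + apply Rel_lift_l0_t; auto.
  - simpl. apply R_y3; auto. apply IHRel; auto. apply Rel_lift_m0; auto.
Qed.

Lemma subM : forall r k1 Q1 Y u s, Rel r k1 Q1 Y u s ->
  forall kc kc' v w, Q1 kc = false -> (forall b, k1 b = kc' <-> b = kc) ->
  Rel r k1 Q1 Y v w ->
  Rel r k1 Q1 Y (subst_m kc v u) (subst_m kc' w s).
Proof.
  induction 1; intros kc kc' v w Hc Hk Hvw; simpl.
  - constructor.
  - constructor. apply IHRel; auto. apply Rel_lift_l0; auto.
  - constructor; eauto.
  - constructor. apply IHRel; auto.
    + intros [|b]; simpl; split; intro; try discriminate; try lia.
      * f_equal. apply Hk. lia.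
      * f_equal. apply Hk. lia.
    + apply Rel_lift_m0; auto.
  - destruct (Nat.eqb_spec b kc); destruct (Nat.eqb_spec (k b) kc').
    + apply R_nam; auto. constructor; auto.
    + exfalso. apply n. apply Hk. auto.
    + exfalso. apply n. apply Hk. auto.
    + apply R_nam; auto.
  - assert (b <> kc) by congruence.
    destruct (Nat.eqb_spec b kc); [contradiction|].
    destruct (Nat.eqb_spec (k b) kc'). { apply Hk in e; contradiction. }
    apply R_y1; auto.
  - assert (b <> kc) by congruence.
    destruct (Nat.eqb_spec b kc); [contradiction|].
    destruct (Nat.eqb_spec (k b) kc'). { apply Hk in e; contradiction. }
    apply R_y2; auto. apply IHRel; auto. apply Rel_lift_l0_t; auto.
  - assert (b <> kc) by congruence.
    destruct (Nat.eqb_spec b kc); [contradiction|].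
    destruct (Nat.eqb_spec (k b) kc'). { apply Hk in e; contradiction. }
    apply R_y3; auto. apply IHRel; auto.
    + intros [|b']; simpl; split; intro; try discriminate; try lia.
      * f_equal. apply Hk. lia.
      * f_equal. apply Hk. lia.
    + apply Rel_lift_m0; auto.
Qed.
Lemma inv_lam_s : forall r k Q Y t b, Rel r k Q Y t (Lam b) ->
  exists a, t = Lam a /\ Rel (up r) k Q (S Y) a b.
Proof. intros. inversion H; subst; eauto. Qed.

Lemma inv_mu_s : forall r k Q Y t b, Rel r k Q Y t (Mu b) ->
  exists a, t = Mu a /\ Rel r (up k) (consb false Q) Y a b.
Proof. intros. inversion H; subst; eauto. Qed.

Lemma inv_lam_t : forall r k Q Y a s, Rel r k Q Y (Lam a) s ->
  exists b, s = Lam b /\ Rel (up r) k Q (S Y) a b.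
Proof. intros. inversion H; subst; eauto. Qed.

Lemma inv_mu_t : forall r k Q Y a s, Rel r k Q Y (Mu a) s ->
  exists b, s = Mu b /\ Rel r (up k) (consb false Q) Y a b.
Proof. intros. inversion H; subst; eauto. Qed.

Lemma red_lam : forall a a', red a a' -> red (Lam a) (Lam a').
Proof. induction 1; [apply rt_step; constructor; auto|apply rt_refl|eapply rt_trans; eauto]. Qed.
Lemma red_mu : forall a a', red a a' -> red (Mu a) (Mu a').
Proof. induction 1; [apply rt_step; constructor; auto|apply rt_refl|eapply rt_trans; eauto]. Qed.
Lemma red_named : forall b a a', red a a' -> red (Named b a) (Named b a').
Proof. induction 1; [apply rt_step; constructor; auto|apply rt_refl|eapply rt_trans; eauto]. Qed.
Lemma red_appl : forall a a' c, red a a' -> red (App a c) (App a' c).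
Proof. induction 1; [apply rt_step; constructor; auto|apply rt_refl|eapply rt_trans; eauto]. Qed.
Lemma red_appr : forall a a' c, red a a' -> red (App c a) (App c a').
Proof. induction 1; [apply rt_step; constructor; auto|apply rt_refl|eapply rt_trans; eauto]. Qed.

Lemma Rel_beta : forall r k Q Y a b t2 s2, Rel (up r) k Q (S Y) a b -> Rel r k Q Y t2 s2 ->
  Rel r k Q Y (subst_l 0 t2 a) (subst_l 0 s2 b).
Proof.
  intros. apply (subL _ _ _ _ _ _ H 0 0 r Y t2 s2); auto.
  intros [|m] Hm; [lia|]. simpl. split; auto.
Qed.

Lemma Rel_mustep : forall r k Q Y a b t2 s2, Rel r (up k) (consb false Q) Y a b -> Rel r k Q Y t2 s2 ->
  Rel r k Q Y (Mu (subst_m 0 (lift_m 0 t2) a)) (Mu (subst_m 0 (lift_m 0 s2) b)).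
Proof.
  intros. constructor. apply subM; auto.
  - intros [|b']; simpl; split; intro; auto; discriminate.
  - apply Rel_lift_m0; auto.
Qed.

Lemma sim : forall r k Q Y t s, Rel r k Q Y t s -> forall s', step s s' ->
  exists t', red t t' /\ Rel r k Q Y t' s'.
Proof.
  induction 1; intros s' Hs; inversion Hs; subst.
  - edestruct IHRel as [t' [Hr1 Hr2]]; [eassumption|]. exists (Lam t'). split; [apply red_lam; auto|constructor; auto].
  - match goal with H: Rel _ _ _ _ _ (Lam _) |- _ => destruct (inv_lam_s _ _ _ _ _ _ H) as [a [-> Ha]] end.
    exists (subst_l 0 t2 a). split; [apply rt_step; constructor|]. apply Rel_beta; auto.
  - match goal with H: Rel _ _ _ _ _ (Mu _) |- _ => destruct (inv_mu_s _ _ _ _ _ _ H) as [a [-> Ha]] end.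
    eexists. split; [apply rt_step; constructor|]. apply Rel_mustep; auto.
  - edestruct IHRel1 as [t' [Hr1 Hr2]]; [eassumption|]. exists (App t' t2). split; [apply red_appl; auto|constructor; auto].
  - edestruct IHRel2 as [t' [Hr1 Hr2]]; [eassumption|]. exists (App t1 t'). split; [apply red_appr; auto|constructor; auto].
  - edestruct IHRel as [t' [Hr1 Hr2]]; [eassumption|]. exists (Mu t'). split; [apply red_mu; auto|constructor; auto].
  - edestruct IHRel as [t' [Hr1 Hr2]]; [eassumption|]. exists (Named b t'). split; [apply red_named; auto|apply R_nam; auto].
  - match goal with H: step (App _ _) _ |- _ => inversion H; subst end.
    + match goal with H: Rel _ _ _ _ _ (Lam _) |- _ => destruct (inv_lam_s _ _ _ _ _ _ H) as [a [-> Ha]] end.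
      exists (Named b (Lam a)). split; [apply rt_refl|]. apply R_y2; auto. apply L3l; auto.
    + match goal with H: Rel _ _ _ _ _ (Mu _) |- _ => destruct (inv_mu_s _ _ _ _ _ _ H) as [a [-> Ha]] end.
      exists (Named b (Mu a)). split; [apply rt_refl|]. apply R_y3; auto. simpl. apply L3m; auto.
    + edestruct IHRel as [t' [Hr1 Hr2]]; [eassumption|]. exists (Named b t').
      split; [apply red_named; auto|apply R_y1; auto].
    + match goal with H: step (Var _) _ |- _ => inversion H end.
  - edestruct IHRel as [t' [Hr1 Hr2]]; [eassumption|]. exists (Named b (Lam t')).
    split; [apply red_named, red_lam; auto|apply R_y2; auto].
  - match goal with H: step (Mu _) _ |- _ => inversion H; subst end. edestruct IHRel as [t' [Hr1 Hr2]]; [eassumption|]. exists (Named b (Mu t')).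
    split; [apply red_named, red_mu; auto|apply R_y3; auto].
Qed.
Lemma norm_Rel : forall r k Q Y t s, Rel r k Q Y t s -> normal s -> normal t.
Proof.
  induction 1; intros Hn t' Hst; inversion Hst; subst.
  - apply (IHRel (fun s' H' => Hn _ (step_lam _ _ H')) _ ltac:(eassumption)).
  - destruct (inv_lam_t _ _ _ _ _ _ H) as [b [-> Hb]]. apply (Hn _ (step_beta _ _)).
  - destruct (inv_mu_t _ _ _ _ _ _ H) as [b [-> Hb]]. apply (Hn _ (step_mu _ _)).
  - apply (IHRel1 (fun s' H' => Hn _ (step_appl _ _ _ H')) _ ltac:(eassumption)).
  - apply (IHRel2 (fun s' H' => Hn _ (step_appr _ _ _ H')) _ ltac:(eassumption)).
  - apply (IHRel (fun s' H' => Hn _ (step_mu_c _ _ H')) _ ltac:(eassumption)).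
  - apply (IHRel (fun s' H' => Hn _ (step_named _ _ _ H')) _ ltac:(eassumption)).
  - apply (IHRel (fun s' H' => Hn _ (step_named _ _ _ (step_appl _ _ _ H'))) _ ltac:(eassumption)).
  - inversion H4; subst.
    apply (IHRel (fun s' H' => Hn _ (step_named _ _ _ H')) _ ltac:(eassumption)).
  - inversion H4; subst.
    apply (IHRel (fun s' H' => Hn _ (step_named _ _ _ (step_mu_c _ _ H'))) _ ltac:(eassumption)).
Qed.

Definition T r k Q Y t u :=
  (exists s, u = App s (Var Y) /\ Rel r k Q Y t s) \/
  (exists a, t = Lam a /\ Rel (cons_f Y r) k Q Y a u) \/
  (exists a b, t = Mu a /\ u = Mu b /\ Rel r (up k) (consb true Q) Y a b).

Lemma simT : forall r k Q Y t u, T r k Q Y t u -> forall u', step u u' ->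
  exists t', red t t' /\ T r k Q Y t' u'.
Proof.
  intros r k Q Y t u [[s [-> H]] | [[a [-> H]] | [a [b [-> [-> H]]]]]] u' Hs.
  - inversion Hs; subst.
    + destruct (inv_lam_s _ _ _ _ _ _ H) as [a [-> Ha]].
      exists (Lam a). split; [apply rt_refl|]. right; left. exists a. split; auto. apply L3l; auto.
    + destruct (inv_mu_s _ _ _ _ _ _ H) as [a [-> Ha]].
      exists (Mu a). split; [apply rt_refl|]. right; right. exists a, (subst_m 0 (Var Y) u).
      split; auto. split; auto. apply L3m; auto.
    + destruct (sim _ _ _ _ _ _ H _ ltac:(eassumption)) as [t' [Hr1 Hr2]]. exists t'. split; auto.
      left. exists u'0. auto.
    + inversion H3.
  - destruct (sim _ _ _ _ _ _ H _ Hs) as [t' [Hr1 Hr2]]. exists (Lam t').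
    split; [apply red_lam; auto|]. right; left. exists t'; auto.
  - inversion Hs; subst. destruct (sim _ _ _ _ _ _ H _ ltac:(eassumption)) as [t' [Hr1 Hr2]]. exists (Mu t').
    split; [apply red_mu; auto|]. right; right. exists t', u'0; auto.
Qed.

Lemma normT : forall r k Q Y t u, T r k Q Y t u -> normal u -> normal t.
Proof.
  intros r k Q Y t u [[s [-> H]] | [[a [-> H]] | [a [b [-> [-> H]]]]]] Hn.
  - apply (norm_Rel _ _ _ _ _ _ H). intros s' H'. apply (Hn _ (step_appl _ _ _ H')).
  - intros t' Ht. inversion Ht; subst. apply (norm_Rel _ _ _ _ _ _ H Hn _ ltac:(eassumption)).
  - intros t' Ht. inversion Ht; subst.
    apply (norm_Rel _ _ _ _ _ _ H (fun s' H' => Hn _ (step_mu_c _ _ H')) _ ltac:(eassumption)).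
Qed.

Lemma sim_red_gen : forall (P : term -> term -> Prop),
  (forall t s s', P t s -> step s s' -> exists t', red t t' /\ P t' s') ->
  forall s s', red s s' -> forall t, P t s -> exists t', red t t' /\ P t' s'.
Proof.
  intros P HP s s' Hr. apply clos_rt_rt1n in Hr. induction Hr; intros t Ht.
  - exists t. split; auto. apply rt_refl.
  - destruct (HP _ _ _ Ht H) as [t1 [Hr1 H1]]. destruct (IHHr _ ltac:(eassumption)) as [t2 [Hr2 H2]].
    exists t2. split; auto. eapply rt_trans; eauto.
Qed.

From Stdlib Require Import FunctionalExtensionality.

Lemma Rel_sigma : forall xs as_ y t d e,
  Rel (fun n => if (d <=? n) && existsb (Nat.eqb (n - d)) xs then y + d else n)
      (fun b => b)
      (fun b => (e <=? b) && existsb (Nat.eqb (b - e)) as_)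
      (y + d) t (sigma_aux xs as_ y d e t).
Proof.
  intros xs as_ y. induction t; intros d e; simpl.
  - match goal with |- Rel ?r ?k ?Q ?Y _ _ =>
      replace (if (d <=? n) && existsb (Nat.eqb (n - d)) xs then Var (y + d) else Var n)
        with (Var (r n)) by (simpl; destruct ((d <=? n) && existsb (Nat.eqb (n - d)) xs); auto);
      apply R_var end.
  - constructor.
    replace (up (fun n => if (d <=? n) && existsb (Nat.eqb (n - d)) xs then y + d else n))
      with (fun n => if (S d <=? n) && existsb (Nat.eqb (n - S d)) xs then y + S d else n).
    + replace (S (y + d)) with (y + S d) by lia. apply IHt.
    + apply functional_extensionality. intros [|n]; simpl; auto.
      destruct ((d <=? n) && existsb (Nat.eqb (n - d)) xs); auto; lia.
  - constructor; auto.
  - constructor.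
    replace (up (fun b : nat => b)) with (fun b : nat => b)
      by (apply functional_extensionality; intros [|n]; auto).
    replace (consb false (fun b => (e <=? b) && existsb (Nat.eqb (b - e)) as_))
      with (fun b => (S e <=? b) && existsb (Nat.eqb (b - S e)) as_)
      by (apply functional_extensionality; intros [|n]; auto).
    apply IHt.
  - destruct ((e <=? n) && existsb (Nat.eqb (n - e)) as_) eqn:E.
    + apply (R_y1 _ (fun b => b) (fun b => (e <=? b) && existsb (Nat.eqb (b - e)) as_)); auto.
    + apply (R_nam _ (fun b => b) (fun b => (e <=? b) && existsb (Nat.eqb (b - e)) as_)); auto.
Qed.

Theorem mainTheorem12 :
  forall (y : nat) (t : term) (xs as_ : list nat),
    NoDup xs -> NoDup as_ ->
    (normalizable (App (sigma xs as_ y t) (Var y)) -> normalizable t) /\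
    (normalizable (sigma xs as_ y t) -> normalizable t).
Proof.
  intros y t xs as_ _ _.
  pose proof (Rel_sigma xs as_ y t 0 0) as HR. rewrite Nat.add_0_r in HR.
  unfold sigma. split.
  - intros [nf [Hred Hnf]].
    assert (HT : T (fun n => if (0 <=? n) && existsb (Nat.eqb (n - 0)) xs then y else n)
      (fun b => b) (fun b => (0 <=? b) && existsb (Nat.eqb (b - 0)) as_) y t
      (App (sigma_aux xs as_ y 0 0 t) (Var y))).
    { left. eexists; split; [reflexivity|exact HR]. }
    destruct (sim_red_gen _ (fun t s s' H H' => simT _ _ _ _ _ _ H _ H') _ _ Hred _ HT)
      as [t' [Hr1 Hr2]].
    exists t'. split; auto. eapply normT; eauto.
  - intros [nf [Hred Hnf]].
    destruct (sim_red_gen _ (fun t s s' H H' => sim _ _ _ _ _ _ H _ H') _ _ Hred _ HR)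
      as [t' [Hr1 Hr2]].
    exists t'. split; auto. eapply norm_Rel; eauto.
Qed.
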